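(* Let $\mathbb{M}^2$ be a strictly convex normed plane and let $S$ be a set of $n$ points of $\mathbb{M}^2$. For any $\epsilon>0$ there is a point set $S'$ in bijective correspondence with $S$ such that (1) each point of $S'$ is within distance $\epsilon$ (in the norm) of its corresponding point of $S$, and (2) the distances among the points of $S'$ are all distinct.
   Context: $\mathbb{M}^2$ is $\mathbb{R}^2$ with a norm $\|\cdot\|$; it is strictly convex if its unit sphere contains no nondegenerate line segment. *)

(* Defs.v *)
From HB Require Import structures.
From mathcomp Require Import all_boot all_order all_algebra.
From mathcomp Require Import reals.
Set Implicit Arguments. Unset Strict Implicit. Unset Printing Implicit Defensive.
Import Order.TTheory GRing.Theory Num.Theory.
Local Open Scope ring_scope.

Definition is_norm2 (R : realType) (N : 'rV[R]_2 -> R) : Prop :=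
  [/\ forall x, N x = 0 -> x = 0,
      forall (a : R) x, N (a *: x) = `|a| * N x
    & forall x y, N (x + y) <= N x + N y].

Definition strictly_convex2 (R : realType) (N : 'rV[R]_2 -> R) : Prop :=
  forall x y : 'rV[R]_2, x != y ->
    ~ (forall t : R, 0 <= t <= 1 -> N ((1 - t) *: x + t *: y) = 1).

(* Main.v *)
Require Import Defs.
From HB Require Import structures.
From mathcomp Require Import all_boot all_order all_algebra.
From mathcomp Require Import reals.
From mathcomp Require Import ring lra.
Set Implicit Arguments. Unset Strict Implicit. Unset Printing Implicit Defensive.
Import Order.TTheory GRing.Theory Num.Theory.
Local Open Scope ring_scope.

Lemma N0 (R : realType) (N : 'rV[R]_2 -> R) (HN : is_norm2 N) : N 0 = 0.
Proof. case: HN => _ Hs _. by rewrite -(scale0r 0) Hs normr0 mul0r. Qed.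

Lemma NN (R : realType) (N : 'rV[R]_2 -> R) (HN : is_norm2 N) x : N (- x) = N x.
Proof. case: HN => _ Hs _. by rewrite -scaleN1r Hs normrN normr1 mul1r. Qed.

Lemma Nge0 (R : realType) (N : 'rV[R]_2 -> R) (HN : is_norm2 N) x : 0 <= N x.
Proof.
have := (let: And3 _ _ Ht := HN in Ht) x (-x); rewrite subrr (N0 HN) (NN HN) => h.
lra.
Qed.

Lemma Nsym (R : realType) (N : 'rV[R]_2 -> R) (HN : is_norm2 N) x y : N (x - y) = N (y - x).
Proof. by rewrite -(NN HN) opprB. Qed.

Lemma Nrev (R : realType) (N : 'rV[R]_2 -> R) (HN : is_norm2 N) x y :
  `|N x - N y| <= N (x - y).
Proof.
have Ht := (let: And3 _ _ Ht := HN in Ht).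
have h1 := Ht (x - y) y. rewrite subrK in h1.
have h2 := Ht (y - x) x. rewrite subrK (Nsym HN y x) in h2.
rewrite ler_norml; apply/andP; split; lra.
Qed.

Lemma Nconv (R : realType) (N : 'rV[R]_2 -> R) (HN : is_norm2 N) w u a b s :
  0 <= s <= 1 ->
  N (w + ((1 - s) * a + s * b) *: u) <= (1 - s) * N (w + a *: u) + s * N (w + b *: u).
Proof.
case: HN => _ Hs Ht /andP[s0 s1].
have -> : w + ((1 - s) * a + s * b) *: u = (1 - s) *: (w + a *: u) + s *: (w + b *: u).
  by apply/rowP => i; rewrite !mxE; ring.
apply: le_trans (Ht _ _) _.
rewrite !Hs !ger0_norm //; lra.
Qed.

Lemma Nbetween (R : realType) (N : 'rV[R]_2 -> R) (HN : is_norm2 N) w u a b x r :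
  a <= x -> x <= b -> a < b -> N (w + a *: u) = r -> N (w + b *: u) = r ->
  N (w + x *: u) <= r.
Proof.
move=> ax xb ab ha hb.
have ba : b - a != 0 by rewrite subr_eq0 gt_eqF.
set s := (x - a) / (b - a).
have s0 : 0 <= s by rewrite divr_ge0 // subr_ge0 // ltW.
have s1 : s <= 1 by rewrite ler_pdivrMr ?subr_gt0 //; lra.
have hx : x = (1 - s) * a + s * b by rewrite /s; field.
have := Nconv HN w u a b (s:=s). rewrite s0 s1 => /(_ isT).
rewrite -hx ha hb => h. lra.
Qed.

Lemma Nthree (R : realType) (N : 'rV[R]_2 -> R) (HN : is_norm2 N) w u t1 t2 t3 r :
  t1 < t2 -> t2 < t3 -> N (w + t1 *: u) = r -> N (w + t2 *: u) = r -> N (w + t3 *: u) = r ->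
  forall t, t1 <= t <= t2 -> N (w + t *: u) = r.
Proof.
move=> h12 h23 e1 e2 e3 t /andP[ht1 ht2].
apply/eqP; rewrite eq_le; apply/andP; split.
  have := Nbetween HN ht1 ht2 h12 e1 e2. by [].
have ht3 : t < t3 by apply: le_lt_trans h23.
set l := (t2 - t) / (t3 - t).
have l0 : 0 <= l by rewrite divr_ge0 // subr_ge0 // ltW.
have l1 : l < 1 by rewrite ltr_pdivrMr ?subr_gt0 //; lra.
have t3t : t3 - t != 0 by rewrite subr_eq0 gt_eqF.
have hx : t2 = (1 - l) * t + l * t3 by rewrite /l; field.
have := Nconv HN w u t t3 (s:=l). rewrite l0 (ltW l1) => /(_ isT).
rewrite -hx e2 e3 => h.
have : (1 - l) * r <= (1 - l) * N (w + t *: u) by lra.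
rewrite ler_pM2l; last lra. by [].
Qed.

Lemma Nnoseg (R : realType) (N : 'rV[R]_2 -> R) (HN : is_norm2 N) (Hsc : strictly_convex2 N)
  w u a b r : u != 0 -> a < b -> (forall t, a <= t <= b -> N (w + t *: u) = r) -> False.
Proof.
move=> u0 ab H.
have ea := H a; rewrite lexx ltW //= in ea; have {}ea := ea isT.
have eb := H b; rewrite lexx ltW //= in eb; have {}eb := eb isT.
have ba : b - a != 0 by rewrite subr_eq0 gt_eqF.
have Hd : (w + b *: u) - (w + a *: u) = (b - a) *: u.
  by apply/rowP => i; rewrite !mxE; ring.
case: (eqVneq r 0) => [r0|r0].
  case: HN => H0 _ _.
  have := H0 _ (etrans ea r0); have := H0 _ (etrans eb r0) => hb ha.
  move: Hd; rewrite ha hb subrr => /esym /eqP; rewrite scaler_eq0 (negbTE ba) (negbTE u0) //.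
have rp : 0 < r by rewrite lt_def r0 -ea (Nge0 HN).
apply: (Hsc (r^-1 *: (w + a *: u)) (r^-1 *: (w + b *: u))).
  apply/negP => /eqP h.
  have : r *: (r^-1 *: (w + a *: u)) = r *: (r^-1 *: (w + b *: u)) by rewrite h.
  rewrite !scalerA mulfV // !scale1r => h2.
  move: Hd; rewrite h2 subrr => /esym /eqP; rewrite scaler_eq0 (negbTE ba) (negbTE u0) //.
move=> t /andP[t0 t1].
have -> : (1 - t) *: (r^-1 *: (w + a *: u)) + t *: (r^-1 *: (w + b *: u))
   = r^-1 *: (w + ((1 - t) * a + t * b) *: u).
  by apply/rowP => i; rewrite !mxE; ring.
case: HN => _ Hs _.
rewrite Hs H; last first.
  apply/andP; split; nra.
by rewrite ger0_norm ?invr_ge0 ?ltW // mulVf.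
Qed.

Lemma Nsphere3 (R : realType) (N : 'rV[R]_2 -> R) (HN : is_norm2 N) (Hsc : strictly_convex2 N)
  w u t1 t2 t3 r : u != 0 -> t1 < t2 -> t2 < t3 ->
  N (w + t1 *: u) = r -> N (w + t2 *: u) = r -> N (w + t3 *: u) = r -> False.
Proof.
move=> u0 h12 h23 e1 e2 e3.
exact: (Nnoseg HN Hsc u0 h12 (Nthree HN h12 h23 e1 e2 e3)).
Qed.

Lemma Nbis2 (R : realType) (N : 'rV[R]_2 -> R) (HN : is_norm2 N) (Hsc : strictly_convex2 N)
  w u t1 t2 : u != 0 -> t1 < t2 -> t2 - t1 < 1 ->
  N (w + t1 *: u) = N (w + (t1 - 1) *: u) -> N (w + t2 *: u) = N (w + (t2 - 1) *: u) -> False.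
Proof.
move=> u0 h12 hd e1 e2.
have a1 : N (w + (t2 - 1) *: u) <= N (w + t1 *: u).
  have := Nbetween HN (w:=w) (u:=u) (a:=t1 - 1) (b:=t1) (x:=t2 - 1) (r:=N (w + t1 *: u)).
  move=> H; apply: H => //; lra.
have a2 : N (w + t1 *: u) <= N (w + (t2 - 1) *: u).
  have := Nbetween HN (w:=w) (u:=u) (a:=t2 - 1) (b:=t2) (x:=t1) (r:=N (w + (t2 - 1) *: u)).
  move=> H; apply: H => //; lra.
have e : N (w + (t2 - 1) *: u) = N (w + t1 *: u) by apply/eqP; rewrite eq_le a1 a2.
apply: (Nsphere3 HN Hsc (t1:=t2 - 1) (t2:=t1) (t3:=t2) u0) => //; try lra.
Qed.

Definition avoidable (R : realType) (N : 'rV[R]_2 -> R) (P : 'rV[R]_2 -> Prop) :=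
  forall p eta, 0 < eta -> exists q eta', 0 < eta' /\
    forall y, N (y - q) < eta' -> N (y - p) < eta /\ P y.

Lemma Ntri3 (R : realType) (N : 'rV[R]_2 -> R) (HN : is_norm2 N) z y p :
  N (z - p) <= N (z - y) + N (y - p).
Proof.
case: HN => _ _ Ht. have -> : z - p = (z - y) + (y - p) by rewrite addrA subrK.
exact: Ht.
Qed.

Lemma avoid_single (R : realType) (N : 'rV[R]_2 -> R) (HN : is_norm2 N)
  (g : 'rV[R]_2 -> R) u : u != 0 ->
  (forall y z, `|g y - g z| <= 2 * N (y - z)) ->
  (forall w t1 t2 t3, t1 < t2 -> t2 < t3 -> t3 - t1 < 1 ->
     g (w + t1 *: u) = 0 -> g (w + t2 *: u) = 0 -> g (w + t3 *: u) = 0 -> False) ->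
  avoidable N (fun y => g y != 0).
Proof.
move=> u0 Hl H3 p eta eta0.
have a0 : 0 < N u.
  rewrite lt_def (Nge0 HN) andbT; apply/negP => /eqP h.
  case: HN => H0 _ _; by move: u0; rewrite (H0 _ h) eqxx.
set d := Num.min (eta / (4 * N u)) (1/4).
have d0 : 0 < d by rewrite lt_min; apply/andP; split; apply: divr_gt0 => //; lra.
have d1 : d <= 1/4 by rewrite ge_min lexx orbT.
have d2 : d * N u <= eta / 4.
  have : d <= eta / (4 * N u) by rewrite ge_min lexx.
  rewrite ler_pdivlMr; last lra. lra.
have hy : forall t, 0 <= t <= 3 * d -> N ((p + t *: u) - p) < eta.
  move=> t /andP[t0 t3]. rewrite (addrC p) addrK.
  case: HN => _ Hs _; rewrite Hs ger0_norm //. nra.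
have [y [hyp gy]] : exists y, N (y - p) < eta /\ g y != 0.
  case: (eqVneq (g (p + d *: u)) 0) => e1; last by exists (p + d *: u); split => //; apply: hy; apply/andP; split; lra.
  case: (eqVneq (g (p + (2 * d) *: u)) 0) => e2; last by exists (p + (2 * d) *: u); split => //; apply: hy; apply/andP; split; lra.
  case: (eqVneq (g (p + (3 * d) *: u)) 0) => e3; last by exists (p + (3 * d) *: u); split => //; apply: hy; apply/andP; split; lra.
  exfalso; apply: (H3 p d (2 * d) (3 * d)) => //; lra.
have gy0 : 0 < `|g y| by rewrite normr_gt0.
exists y, (Num.min (eta - N (y - p)) (`|g y| / 4)); split.
  rewrite lt_min; apply/andP; split; lra.
move=> z; rewrite lt_min => /andP[hz1 hz2]; split.
  have := Ntri3 HN z y p; lra.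
apply/eqP => gz.
have := Hl z y. rewrite gz sub0r normrN => h. lra.
Qed.

Lemma avoid_and (R : realType) (N : 'rV[R]_2 -> R) (P Q : 'rV[R]_2 -> Prop) :
  avoidable N P -> avoidable N Q -> avoidable N (fun y => P y /\ Q y).
Proof.
move=> hP hQ p eta eta0.
have [q1 [e1 [e10 H1]]] := hP p eta eta0.
have [q2 [e2 [e20 H2]]] := hQ q1 e1 e10.
exists q2, e2; split => // y /H2 [/H1 [h1 h2] h3]; split => //.
Qed.

Lemma avoid_true (R : realType) (N : 'rV[R]_2 -> R) (P : 'rV[R]_2 -> Prop) :
  (forall y, P y) -> avoidable N P.
Proof. by move=> hP p eta eta0; exists p, eta; split. Qed.

Lemma avoid_imp (R : realType) (N : 'rV[R]_2 -> R) (b : bool) (P : 'rV[R]_2 -> Prop) :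
  (b -> avoidable N P) -> avoidable N (fun y => b -> P y).
Proof.
case: b => h; last by apply: avoid_true.
have {}h := h isT.
move=> p eta eta0; have [q [e [e0 H]]] := h p eta eta0.
exists q, e; split => // y /H [h1 h2]; split => //.
Qed.

Lemma avoid_all (R : realType) (N : 'rV[R]_2 -> R) (c : nat) (P : nat -> 'rV[R]_2 -> Prop) :
  (forall i, (i < c)%N -> avoidable N (P i)) ->
  avoidable N (fun y => forall i, (i < c)%N -> P i y).
Proof.
elim: c => [|c IH] H.
  by apply: avoid_true.
have h1 : avoidable N (fun y => (forall i, (i < c)%N -> P i y) /\ P c y).
  apply: avoid_and; first by apply: IH => i ic; apply: H; apply: ltn_trans ic _.
  exact: H.
move=> p eta eta0; have [q [e [e0 Hq]]] := h1 p eta eta0.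
exists q, e; split => // y /Hq [h2 [h3 h4]]; split => // i.
rewrite ltnS leq_eqVlt => /orP[/eqP -> //|]; exact: h3.
Qed.

Lemma one_neq0 (R : realType) : (const_mx 1 : 'rV[R]_2) != 0.
Proof. apply/eqP => /rowP /(_ 0); rewrite !mxE => /eqP; by rewrite oner_eq0. Qed.

Lemma avoid_sphere (R : realType) (N : 'rV[R]_2 -> R) (HN : is_norm2 N) (Hsc : strictly_convex2 N)
  c r : avoidable N (fun y => N (y - c) - r != 0).
Proof.
apply: (avoid_single HN (one_neq0 R)).
  move=> y z. rewrite opprB addrA subrK.
  apply: le_trans (Nrev HN _ _) _.
  have -> : y - c - (z - c) = y - z by apply/rowP => i; rewrite !mxE; ring.
  have := Nge0 HN (y - z); lra.
move=> w t1 t2 t3 h12 h23 _.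
have E : forall t, w + t *: const_mx 1 - c = (w - c) + t *: const_mx 1.
  by move=> t; apply/rowP => i; rewrite !mxE; ring.
rewrite !E => /eqP; rewrite subr_eq0 => /eqP e1 /eqP; rewrite subr_eq0 => /eqP e2 /eqP; rewrite subr_eq0 => /eqP e3.
exact: (Nsphere3 HN Hsc (one_neq0 R) h12 h23 e1 e2 e3).
Qed.

Lemma avoid_bis (R : realType) (N : 'rV[R]_2 -> R) (HN : is_norm2 N) (Hsc : strictly_convex2 N)
  c d : c != d -> avoidable N (fun y => N (y - c) - N (y - d) != 0).
Proof.
move=> cd.
have u0 : d - c != 0 by rewrite subr_eq0 eq_sym.
apply: (avoid_single HN u0).
  move=> y z.
  have e1 := Nrev HN (y - c) (z - c).
  have e2 := Nrev HN (y - d) (z - d).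
  have Ec : y - c - (z - c) = y - z by apply/rowP => i; rewrite !mxE; ring.
  have Ed : y - d - (z - d) = y - z by apply/rowP => i; rewrite !mxE; ring.
  rewrite Ec in e1; rewrite Ed in e2.
  have -> : N (y - c) - N (y - d) - (N (z - c) - N (z - d))
          = (N (y - c) - N (z - c)) - (N (y - d) - N (z - d)) by ring.
  apply: le_trans (ler_normB _ _) _. lra.
move=> w t1 t2 t3 h12 h23 hd.
have E1 : forall t, w + t *: (d - c) - c = (w - c) + t *: (d - c).
  by move=> t; apply/rowP => i; rewrite !mxE; ring.
have E2 : forall t, w + t *: (d - c) - d = (w - c) + (t - 1) *: (d - c).
  by move=> t; apply/rowP => i; rewrite !mxE; ring.
rewrite !E1 !E2 => /eqP; rewrite subr_eq0 => /eqP e1 /eqP; rewrite subr_eq0 => /eqP e2 _.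
apply: (Nbis2 HN Hsc u0 h12 _ e1 e2); lra.
Qed.


Definition good_cfg (R : realType) (N : 'rV[R]_2 -> R) (X T : nat -> 'rV[R]_2) (eps : R) (m : nat) :=
 [/\ forall i, (i < m)%N -> N (T i - X i) < eps,
     forall i j, (i < j)%N -> (j < m)%N -> N (T i - T j) != 0
   & forall i j k l, (i < j)%N -> (j < m)%N -> (k < l)%N -> (l < m)%N -> (i, j) != (k, l) ->
        N (T i - T j) != N (T k - T l)].

Lemma step_cfg (R : realType) (N : 'rV[R]_2 -> R) (HN : is_norm2 N) (Hsc : strictly_convex2 N)
  X T eps m : 0 < eps -> good_cfg N X T eps m -> exists T', good_cfg N X T' eps m.+1.
Proof.
move=> eps0 [G1 G2 G3].
have Hav : avoidable N (fun y =>
   (forall j, (j < m)%N -> N (y - T j) - 0 != 0) /\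
   ((forall a, (a < m)%N -> forall b, (b < m)%N -> (a < b)%N -> forall j, (j < m)%N ->
        N (y - T j) - N (T a - T b) != 0) /\
    (forall j, (j < m)%N -> forall j', (j' < m)%N -> (j < j')%N ->
        N (y - T j) - N (y - T j') != 0))).
  apply: avoid_and; first by apply: avoid_all => j _; apply: avoid_sphere.
  apply: avoid_and.
    apply: avoid_all => a ha; apply: avoid_all => b hb; apply: avoid_imp => hab.
    by apply: avoid_all => j _; apply: avoid_sphere.
  apply: avoid_all => j hj; apply: avoid_all => j' hj'; apply: avoid_imp => hjj'.
  apply: avoid_bis => //; apply/eqP => E.
  by move: (G2 j j' hjj' hj'); rewrite E subrr (N0 HN) eqxx.
have [q [e [e0 Hq]]] := Hav (X m) eps eps0.
have [hq [P1 [P2 P3]]] := Hq q ltac:(by rewrite subrr (N0 HN)).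
exists (fun i => if i == m then q else T i); split.
- move=> i; rewrite ltnS leq_eqVlt => /orP[/eqP ->|hi]; first by rewrite eqxx.
  by rewrite (ltn_eqF hi); apply: G1.
- move=> i j hij; rewrite ltnS leq_eqVlt => /orP[/eqP Ej|hj].
    rewrite Ej in hij *. rewrite eqxx (ltn_eqF hij) (Nsym HN).
    by have := P1 i hij; rewrite subr0.
  by rewrite (ltn_eqF hj) (ltn_eqF (ltn_trans hij hj)); apply: G2.
- move=> i j k l hij; rewrite ltnS leq_eqVlt => /orP[/eqP Ej|hj] hkl;
    rewrite ltnS leq_eqVlt => /orP[/eqP El|hl] hne.
  + move: hij hkl hne; rewrite Ej El => hij hkl hne. rewrite eqxx (ltn_eqF hij) (ltn_eqF hkl) (Nsym HN) (Nsym HN (T k)).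
    have ik : i != k by apply: contra hne => /eqP ->.
    case: (ltngtP i k) => [ik'|ki'|/eqP]; last by rewrite (negbTE ik).
      by have := P3 i hij k hkl ik'; rewrite subr_eq0.
    by have := P3 k hkl i hij ki'; rewrite subr_eq0 eq_sym.
  + move: hij hne; rewrite Ej => hij hne. rewrite eqxx (ltn_eqF hij) (ltn_eqF hl) (ltn_eqF (ltn_trans hkl hl)) (Nsym HN).
    by have := P2 k (ltn_trans hkl hl) l hl hkl i hij; rewrite subr_eq0.
  + move: hkl hne; rewrite El => hkl hne. rewrite eqxx (ltn_eqF hkl) (ltn_eqF hj) (ltn_eqF (ltn_trans hij hj)) (Nsym HN (T k)).
    by have := P2 i (ltn_trans hij hj) j hj hij k hkl; rewrite subr_eq0 eq_sym.
  + rewrite (ltn_eqF hj) (ltn_eqF hl) (ltn_eqF (ltn_trans hij hj)) (ltn_eqF (ltn_trans hkl hl)).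
    exact: G3.
Qed.

Lemma all_cfg (R : realType) (N : 'rV[R]_2 -> R) (HN : is_norm2 N) (Hsc : strictly_convex2 N)
  X eps m : 0 < eps -> exists T, good_cfg N X T eps m.
Proof.
move=> eps0; elim: m => [|m [T HT]].
  by exists X; split => //.
by have := step_cfg HN Hsc eps0 HT.
Qed.

Theorem proposition6p2 (R : realType) (N : 'rV[R]_2 -> R)
    (HN : is_norm2 N) (Hsc : strictly_convex2 N)
    (n : nat) (S : 'I_n -> 'rV[R]_2) (HS : injective S)
    (eps : R) (Heps : 0 < eps) :
  exists S' : 'I_n -> 'rV[R]_2,
    [/\ injective S',
        (forall i, N (S' i - S i) < eps)
      & forall i j k l : 'I_n, (i < j)%N -> (k < l)%N -> (i, j) != (k, l) ->
          N (S' i - S' j) != N (S' k - S' l)].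
Proof.
pose X := fun i : nat => if insub i is Some o then S o else 0.
have HX : forall o : 'I_n, X (val o) = S o by move=> o; rewrite /X valK.
have [T [G1 G2 G3]] := all_cfg HN Hsc X n Heps.
exists (fun o => T (val o)); split.
- move=> i j E; apply: val_inj => /=.
  case: (ltngtP (val i) (val j)) => // h.
    by move: (G2 _ _ h (ltn_ord j)); rewrite E subrr (N0 HN) eqxx.
  by move: (G2 _ _ h (ltn_ord i)); rewrite E subrr (N0 HN) eqxx.
- by move=> i; rewrite -HX; apply: G1 (ltn_ord i).
- move=> i j k l hij hkl hne; apply: G3 => //; try exact: ltn_ord.
Qed.
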